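(* Let $D$ be an integral domain, $\star$ a semistar operation on $D$, $T$ an overring of $D$ and $\star'$ a semistar operation on $T$; write $\ell=\ell_{\star,T}$. Then: (1) $\ell$ is a stable semistar operation on $T$; (2) if $T$ is $(\star,\star')$-linked to $D$, then $\ell\le\widetilde{\star'}\le\star'_f$; in particular $T$ is $(\ell,\star')$-linked to $T$; (3) $T$ is $(\star,\ell)$-linked to $D$; in particular $D$ is $(\star,\tilde\star)$-linked to $D$; (4) $\ell$ is of finite type on $T$ and $\widetilde{\ell}=\ell$; (5) $\ell$ is the unique minimal element of the set $\{\ast_f:\ \ast$ a semistar operation on $T$ such that $T$ is $(\star,\ast)$-linked to $D\}$; (6) $T$ is $(\star,\star')$-linked to $D$ if and only if $T$ is $(\ell,\star')$-linked to $T$; (7) $T$ is $(\star,\star')$-linked to $D$ if and only if $\ell\le\star'_f$.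
   Context: Let $D$ be an integral domain with quotient field $K$. $\overline{\mathbf F}(D)$ denotes the set of all nonzero $D$-submodules of $K$ and $\mathbf f(D)$ the set of nonzero finitely generated $D$-submodules of $K$. A semistar operation on $D$ is a map $\star:\overline{\mathbf F}(D)\to\overline{\mathbf F}(D)$, $E\mapsto E^\star$, such that for all $0\ne x\in K$ and $E,F\in\overline{\mathbf F}(D)$: (1) $(xE)^\star=xE^\star$; (2) $E\subseteq F\Rightarrow E^\star\subseteq F^\star$; (3) $E\subseteq E^\star$ and $(E^\star)^\star=E^\star$. $\star_1\le\star_2$ means $E^{\star_1}\subseteq E^{\star_2}$ for all $E$. $\star$ is stable if $(E\cap F)^\star=E^\star\cap F^\star$ for all $E,F$. $\star_f$ is defined by $E^{\star_f}=\bigcup\{F^\star:F\in\mathbf f(D),F\subseteq E\}$; $\star$ is of finite type if $\star=\star_f$. A nonzero ideal $I$ of $D$ is a quasi-$\star$-ideal if $I^\star\cap D=I$; a quasi-$\star$-prime is a prime quasi-$\star$-ideal; a quasi-$\star$-maximal ideal is a maximal element among proper quasi-$\star$-ideals; $\mathcal M(\star_f)$ is the set of quasi-$\star_f$-maximal ideals, and $E^{\tilde\star}=\bigcap\{ED_Q:Q\in\mathcal M(\star_f)\}$ (equal to $K$ if $\mathcal M(\star_f)=\emptyset$). An overring of $D$ is a ring $T$ with $D\subseteq T\subseteq K$; all notions are defined analogously on $T$. $T$ is $(\star,\star')$-linked to $D$ if for every nonzero finitely generated ideal $F\subseteq D$ with $F^\star=D^\star$ one has $(FT)^{\star'}=T^{\star'}$.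 The semistar operation $\ell_{\star,T}$ on $T$ is defined by $E^{\ell_{\star,T}}=\bigcap\{ET_{D\setminus P}: P$ a quasi-$\star_f$-prime ideal of $D\}$ for $E\in\overline{\mathbf F}(T)$ (equal to $K$ if there are none). *)

(* Defs.v *)
(* All rings live inside a fixed field K (the quotient field). *)
From mathcomp Require Import all_boot all_algebra.
Set Implicit Arguments. Unset Strict Implicit. Unset Printing Implicit Defensive.
Import GRing.Theory.
Local Open Scope ring_scope.

Section SemistarDefs.
Variable K : fieldType.

Definition subK (A B : K -> Prop) := forall x, A x -> B x.
Definition capK (A B : K -> Prop) : K -> Prop := fun x => A x /\ B x.
Definition scaleK (x : K) (E : K -> Prop) : K -> Prop :=
  fun y => exists e, E e /\ y = x * e.

Definition subring (R : K -> Prop) :=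
  [/\ R 0, R 1, (forall a b, R a -> R b -> R (a - b)) &
      (forall a b, R a -> R b -> R (a * b))].

Definition domain_with_qf (D : K -> Prop) :=
  subring D /\ forall x : K, exists a b, [/\ D a, D b, b != 0 & x = a / b].

Definition overring (D T : K -> Prop) := subring T /\ subK D T.

Definition submod (R E : K -> Prop) :=
  [/\ E 0, (forall x y, E x -> E y -> E (x + y)) &
      (forall r x, R r -> E x -> E (r * x))].

Definition nzsubmod (R E : K -> Prop) := submod R E /\ exists x, E x /\ x != 0.

Definition genmod (R E : K -> Prop) : K -> Prop :=
  fun x => exists (n : nat) (c a : nat -> K),
    (forall i, (i < n)%N -> R (c i) /\ E (a i)) /\ x = \sum_(i < n) c i * a i.

Definition fgmod (R E : K -> Prop) :=
  exists (n : nat) (g : nat -> K),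
    E = genmod R (fun y => exists i, (i < n)%N /\ y = g i).

Definition fgnz (R E : K -> Prop) := nzsubmod R E /\ fgmod R E.

Definition semistar (R : K -> Prop) (st : (K -> Prop) -> (K -> Prop)) :=
  [/\ (forall E, nzsubmod R E -> nzsubmod R (st E)),
      (forall x E, x != 0 -> nzsubmod R E -> st (scaleK x E) = scaleK x (st E)),
      (forall E F, nzsubmod R E -> nzsubmod R F -> subK E F -> subK (st E) (st F)),
      (forall E, nzsubmod R E -> subK E (st E)) &
      (forall E, nzsubmod R E -> st (st E) = st E)].

Definition st_le (R : K -> Prop) (s1 s2 : (K -> Prop) -> (K -> Prop)) :=
  forall E, nzsubmod R E -> subK (s1 E) (s2 E).

Definition stable (R : K -> Prop) (st : (K -> Prop) -> (K -> Prop)) :=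
  forall E F, nzsubmod R E -> nzsubmod R F -> st (capK E F) = capK (st E) (st F).

Definition finite_part (R : K -> Prop) (st : (K -> Prop) -> (K -> Prop))
  : (K -> Prop) -> (K -> Prop) :=
  fun E x => exists F, [/\ fgnz R F, subK F E & st F x].

Definition finite_type (R : K -> Prop) (st : (K -> Prop) -> (K -> Prop)) :=
  forall E, nzsubmod R E -> st E = finite_part R st E.

Definition nzideal (R I : K -> Prop) := subK I R /\ nzsubmod R I.

Definition quasi_ideal (R : K -> Prop) (st : (K -> Prop) -> (K -> Prop)) I :=
  nzideal R I /\ capK (st I) R = I.

Definition quasi_prime (R : K -> Prop) (st : (K -> Prop) -> (K -> Prop)) P :=
  [/\ quasi_ideal R st P, ~ P 1 &
      forall a b, R a -> R b -> P (a * b) -> P a \/ P b].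

Definition quasi_max (R : K -> Prop) (st : (K -> Prop) -> (K -> Prop)) Q :=
  [/\ quasi_ideal R st Q, ~ Q 1 &
      forall I, quasi_ideal R st I -> ~ I 1 -> subK Q I -> I = Q].

(* E S^{-1} for a multiplicative subset S of K, i.e. E T_S = E_S *)
Definition locK (S E : K -> Prop) : K -> Prop :=
  fun x => exists e s, [/\ E e, S s & x = e / s].

Definition compl_in (R P : K -> Prop) : K -> Prop := fun s => R s /\ ~ P s.

(* star tilde: intersection of E R_Q, Q quasi-star_f-maximal (K if none) *)
Definition stilde (R : K -> Prop) (st : (K -> Prop) -> (K -> Prop))
  : (K -> Prop) -> (K -> Prop) :=
  fun E x => forall Q, quasi_max R (finite_part R st) Q -> locK (compl_in R Q) E x.

Definition ell (D : K -> Prop) (st : (K -> Prop) -> (K -> Prop))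
  : (K -> Prop) -> (K -> Prop) :=
  fun E x => forall P, quasi_prime D (finite_part D st) P -> locK (compl_in D P) E x.

Definition linked (D : K -> Prop) (st : (K -> Prop) -> (K -> Prop))
  (T : K -> Prop) (st' : (K -> Prop) -> (K -> Prop)) :=
  forall F, nzideal D F -> fgmod D F -> st F = st D ->
    st' (genmod T F) = st' T.

End SemistarDefs.

(* Main.v *)
Require Import Defs.
From mathcomp Require Import all_boot all_algebra.
From mathcomp Require Import ring.
From Stdlib Require Import Classical FunctionalExtensionality PropExtensionality.
From mathcomp Require classical_sets.
Set Implicit Arguments. Unset Strict Implicit. Unset Printing Implicit Defensive.
Import GRing.Theory.
Local Open Scope ring_scope.

Section Basics.
Variable K : fieldType.
Implicit Types (R D T E F A : K -> Prop).

Lemma pext (A B : K -> Prop) : subK A B -> subK B A -> A = B.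
Proof.
move=> h1 h2; apply: functional_extensionality => x.
apply: propositional_extensionality; split; [exact: h1|exact: h2].
Qed.

Lemma sr0 R : subring R -> R 0. Proof. by case. Qed.
Lemma sr1 R : subring R -> R 1. Proof. by case. Qed.
Lemma srB R a b : subring R -> R a -> R b -> R (a - b).
Proof. by case=> _ _ h _; apply: h. Qed.
Lemma srM R a b : subring R -> R a -> R b -> R (a * b).
Proof. by case=> _ _ _ h; apply: h. Qed.
Lemma srN R a : subring R -> R a -> R (- a).
Proof. by move=> hR ha; have := srB hR (sr0 hR) ha; rewrite sub0r. Qed.
Lemma srD R a b : subring R -> R a -> R b -> R (a + b).
Proof. by move=> hR ha hb; have := srB hR ha (srN hR hb); rewrite opprK. Qed.

Lemma sub_submod R : subring R -> submod R R.
Proof. move=> hR; split; [exact: sr0 hR| move=> *; exact: srD | move=> *; exact: srM]. Qed.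

Definition gset (g : nat -> K) n : K -> Prop := fun y => exists i, (i < n)%N /\ y = g i.

Lemma gen_sub R E A : submod R E -> subK A E -> subK (genmod R A) E.
Proof.
case=> E0 ED EM hA x [n [c [a [h ->]]]].
elim: n h => [|n IH] h; first by rewrite big_ord0.
rewrite big_ord_recr /=; apply: ED.
  by apply: IH => i hi; apply: h; apply: ltnW.
by have [h1 h2] := h n (ltnSn n); apply: EM => //; apply: hA.
Qed.

Lemma gen_in R A x : R 1 -> A x -> genmod R A x.
Proof.
move=> h1 hx; exists 1%N, (fun _ => 1), (fun _ => x); split.
  by move=> i _; split.
by rewrite big_ord1 mul1r.
Qed.

Lemma gen_submod R A : subring R -> submod R (genmod R A).
Proof.
move=> hR; split.
- by exists 0%N, (fun _ => 0), (fun _ => 0); split => //; rewrite big_ord0.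
- move=> x y [n1 [c1 [a1 [h1 ->]]]] [n2 [c2 [a2 [h2 ->]]]].
  exists (n1 + n2)%N, (fun i => if (i < n1)%N then c1 i else c2 (i - n1)%N),
     (fun i => if (i < n1)%N then a1 i else a2 (i - n1)%N); split.
    move=> i hi; case: ifP => hin; first exact: h1.
    by apply: h2; rewrite ltn_subLR //; rewrite leqNgt hin.
  rewrite big_split_ord /=; congr (_ + _).
    by apply: eq_bigr => i _; rewrite /= ltn_ord.
  by apply: eq_bigr => i _; rewrite /= ltnNge leq_addr /= addKn.
- move=> r x hr [n [c [a [h ->]]]].
  exists n, (fun i => r * c i), a; split.
    by move=> i hi; have [? ?] := h i hi; split => //; apply: srM.
  by rewrite mulr_sumr; apply: eq_bigr => i _; rewrite mulrA.
Qed.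

Lemma gen_gset_in R g n i : R 1 -> (i < n)%N -> genmod R (gset g n) (g i).
Proof. by move=> h1 hi; apply: gen_in => //; exists i. Qed.


Lemma fg_add R F1 F2 : subring R -> fgmod R F1 -> fgmod R F2 ->
  exists F, [/\ fgmod R F, subK F1 F, subK F2 F &
     forall E, submod R E -> subK F1 E -> subK F2 E -> subK F E].
Proof.
move=> hR [n1 [g1 ->]] [n2 [g2 ->]].
set g := fun i => if (i < n1)%N then g1 i else g2 (i - n1)%N.
exists (genmod R (gset g (n1 + n2))); split.
- by exists (n1 + n2)%N, g.
- apply: gen_sub; first exact: gen_submod.
  move=> y [i [hi ->]]; have -> : g1 i = g i by rewrite /g hi.
  by apply: gen_gset_in; [exact: sr1|exact: ltn_addr].
- apply: gen_sub; first exact: gen_submod.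
  move=> y [i [hi ->]]; have -> : g2 i = g (n1 + i)%N.
    by rewrite /g ltnNge leq_addr /= addKn.
  by apply: gen_gset_in; [exact: sr1|rewrite ltn_add2l].
- move=> E hE h1 h2; apply: gen_sub => // y [i [hi ->]].
  rewrite /g; case: ifP => hin.
    by apply: h1; apply: gen_gset_in => //; exact: sr1.
  apply: h2; apply: gen_gset_in; first exact: sr1.
  by rewrite ltn_subLR //; rewrite leqNgt hin.
Qed.

Lemma fg_one R x : subring R ->
  [/\ fgmod R (genmod R (gset (fun _ => x) 1)), genmod R (gset (fun _ => x) 1) x &
     forall E, submod R E -> E x -> subK (genmod R (gset (fun _ => x) 1)) E].
Proof.
move=> hR; split.
- by exists 1%N, (fun _ => x).
- by apply: gen_in; [exact: sr1|exists 0%N].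
- by move=> E hE hx; apply: gen_sub => // y [i [_ ->]].
Qed.

Lemma scaleK_sub x E F : subK E F -> subK (scaleK x E) (scaleK x F).
Proof. by move=> h y [e [he ->]]; exists e; split => //; apply: h. Qed.

Lemma scaleKK x F : x != 0 -> scaleK x (scaleK x^-1 F) = F.
Proof.
move=> hx; apply: pext => y.
  by case=> e [[f [hf ->]] ->]; rewrite mulrA mulfV // mul1r.
move=> hy; exists (x^-1 * y); split; first by exists y.
by rewrite mulrA mulfV // mul1r.
Qed.

Lemma scale_nzsubmod R x E : x != 0 -> nzsubmod R E -> nzsubmod R (scaleK x E).
Proof.
move=> hx [[E0 ED EM] [e0 [he0 ne0]]]; split; last first.
  by exists (x * e0); split; [exists e0| rewrite mulf_neq0].
split.
- by exists 0; rewrite mulr0.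
- move=> _ _ [a [ha ->]] [b [hb ->]]; exists (a + b); split; first exact: ED.
  by rewrite mulrDr.
- move=> r _ hr [a [ha ->]]; exists (r * a); split; first exact: EM.
  by rewrite mulrCA.
Qed.

Lemma fg_scale R x F : x != 0 -> fgmod R F -> fgmod R (scaleK x F).
Proof.
move=> hx [n [g ->]]; exists n, (fun i => x * g i); apply: pext.
  move=> _ [_ [[m [c [a [h ->]]]] ->]].
  exists m, c, (fun i => x * a i); split.
    by move=> i hi; have [h1 [j [hj ->]]] := h i hi; split => //; exists j.
  by rewrite mulr_sumr; apply: eq_bigr => i _; rewrite mulrCA.
move=> _ [m [c [a [h ->]]]].
exists (\sum_(i < m) c i * (x^-1 * a i)); split.
  exists m, c, (fun i => x^-1 * a i); split => //.
  move=> i hi; have [h1 [j [hj ->]]] := h i hi; split => //; exists j; split => //.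
  by rewrite mulrA mulVf // mul1r.
by rewrite mulr_sumr; apply: eq_bigr => i _; field.
Qed.

End Basics.
Section FP.
Variable K : fieldType.
Variable R : K -> Prop.
Variable st : (K -> Prop) -> (K -> Prop).
Hypothesis hR : subring R.
Hypothesis hs : semistar R st.
Local Notation fp := (finite_part R st).

Lemma st_nz E : nzsubmod R E -> nzsubmod R (st E).
Proof. by case: hs => h1 h2 h3 h4 h5; apply: h1. Qed.
Lemma st_scale x E : x != 0 -> nzsubmod R E -> st (scaleK x E) = scaleK x (st E).
Proof. by case: hs => h1 h2 h3 h4 h5; apply: h2. Qed.
Lemma st_mono E F : nzsubmod R E -> nzsubmod R F -> subK E F -> subK (st E) (st F).
Proof. by case: hs => h1 h2 h3 h4 h5; apply: h3. Qed.
Lemma st_ext E : nzsubmod R E -> subK E (st E).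
Proof. by case: hs => h1 h2 h3 h4 h5; apply: h4. Qed.
Lemma st_idem E : nzsubmod R E -> st (st E) = st E.
Proof. by case: hs => h1 h2 h3 h4 h5; apply: h5. Qed.

Lemma fg_submod F : fgmod R F -> submod R F.
Proof. by move=> [n [g ->]]; apply: gen_submod. Qed.

Lemma fgnz_of F y : fgmod R F -> F y -> y != 0 -> fgnz R F.
Proof. by move=> hF hy ny; split => //; split; [exact: fg_submod| exists y]. Qed.

Lemma fg_in_sub E : nzsubmod R E -> forall x, E x ->
  exists F, [/\ fgnz R F, subK F E & F x].
Proof.
move=> [hE [e0 [he0 ne0]]] x hx.
have [h1 h2 h3] := fg_one x hR; have [h1' h2' h3'] := fg_one e0 hR.
have [F [hF s1 s2 u]] := fg_add hR h1 h1'.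
exists F; split.
- exact: (fgnz_of hF (s2 _ h2') ne0).
- by apply: u => //; [exact: h3| exact: h3'].
- exact: s1.
Qed.

Lemma fp_mono E F : subK E F -> subK (fp E) (fp F).
Proof. by move=> h x [G [hG hGE hx]]; exists G; split => // y /hGE /h. Qed.

Lemma fp_ext E : nzsubmod R E -> subK E (fp E).
Proof.
move=> hE x hx; have [F [hF hFE hFx]] := fg_in_sub hE hx.
by exists F; split => //; apply: st_ext => //; case: hF.
Qed.

Lemma fp_nz E : nzsubmod R E -> nzsubmod R (fp E).
Proof.
move=> hE; have hE' := hE; case: hE' => [[E0 ED EM] [e0 [he0 ne0]]].
split; last by exists e0; split => //; apply: fp_ext.
split.
- by apply: fp_ext.
- move=> x y [F1 [hF1 s1 hx]] [F2 [hF2 s2 hy]].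
  have [F [hF t1 t2 u]] := fg_add hR (proj2 hF1) (proj2 hF2).
  have [[_ [y1 [hy1 ny1]]] _] := hF1.
  have hFnz : fgnz R F := (fgnz_of hF (t1 _ hy1) ny1).
  exists F; split => //; first by apply: u.
  have [[_ SD _] _] := st_nz (proj1 hFnz).
  by apply: SD; [apply: (st_mono (proj1 hF1) (proj1 hFnz) t1)
                |apply: (st_mono (proj1 hF2) (proj1 hFnz) t2)].
- move=> r x hr [F [hF s hx]]; exists F; split => //.
  by have [[_ _ SM] _] := st_nz (proj1 hF); apply: SM.
Qed.

Lemma fp_idem E : nzsubmod R E -> fp (fp E) = fp E.
Proof.
move=> hE; apply: pext; last by apply: fp_ext; apply: fp_nz.
move=> x [G [hG hGE hx]]; have [hGnz [n [g defG]]] := hG.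
suff [H [hH hHE hg]] : exists H, [/\ fgnz R H, subK H E &
    forall i, (i < n)%N -> st H (g i)].
  exists H; split => //.
  have hstH := st_nz (proj1 hH).
  have sG : subK G (st H).
    by rewrite defG; apply: gen_sub; [case: hstH| move=> y [i [hi ->]]; apply: hg].
  by rewrite -(st_idem (proj1 hH)); apply: (st_mono hGnz hstH sG).
have : forall m, (m <= n)%N -> exists H, [/\ fgnz R H, subK H E &
    forall i, (i < m)%N -> st H (g i)].
  elim=> [|m IH] hm.
    have [_ [e0 [he0 _]]] := hE; have [H [hH hHE _]] := fg_in_sub hE he0.
    by exists H; split.
  have [H [hH hHE hg]] := IH (ltnW hm).
  have : fp E (g m).
    by apply: hGE; rewrite defG; apply: gen_gset_in => //; exact: sr1.
  move=> [F [hF hFE hgm]].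
  have [H' [hH' t1 t2 u]] := fg_add hR (proj2 hH) (proj2 hF).
  have [[_ [y1 [hy1 ny1]]] _] := hH.
  have hH'nz : fgnz R H' := (fgnz_of hH' (t1 _ hy1) ny1).
  exists H'; split => //; first by apply: u => //; case: hE.
  move=> i; rewrite ltnS leq_eqVlt => /orP [/eqP ->|hi].
    exact: (st_mono (proj1 hF) (proj1 hH'nz) t2).
  by apply: (st_mono (proj1 hH) (proj1 hH'nz) t1); apply: hg.
by apply.
Qed.

Lemma fp_scale x E : x != 0 -> nzsubmod R E -> fp (scaleK x E) = scaleK x (fp E).
Proof.
move=> hx hE; apply: pext.
  move=> y [F [hF hFE hy]].
  have hx' : x^-1 != 0 by rewrite invr_eq0.
  have hF' : fgnz R (scaleK x^-1 F).
    by split; [apply: scale_nzsubmod; case: hF| apply: fg_scale; case: hF].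
  move: hy; rewrite -(scaleKK F hx) (st_scale hx (proj1 hF')).
  move=> [e [he ->]]; exists e; split => //; exists (scaleK x^-1 F); split => //.
  move=> z [f [hf ->]]; have [e' [he' ->]] := hFE f hf.
  by rewrite mulrA mulVf // mul1r.
move=> _ [e [[F [hF hFE he]] ->]]; exists (scaleK x F); split.
- by split; [apply: scale_nzsubmod; case: hF| apply: fg_scale; case: hF].
- exact: scaleK_sub.
- by rewrite (st_scale hx (proj1 hF)); exists e.
Qed.

End FP.
Section Zorn.
Variable K : fieldType.
Variable R : K -> Prop.
Variable st : (K -> Prop) -> (K -> Prop).
Hypothesis hR : subring R.
Hypothesis hs : semistar R st.
Local Notation fp := (finite_part R st).

Lemma capK_submod (A B : K -> Prop) : submod R A -> submod R B -> submod R (capK A B).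
Proof.
case=> A0 AD AM [B0 BD BM]; split => //.
- by move=> x y [? ?] [? ?]; split; [apply: AD| apply: BD].
- by move=> r x hr [? ?]; split; [apply: AM| apply: BM].
Qed.

Lemma quasi_in Q x : quasi_ideal R fp Q -> fp Q x -> R x -> Q x.
Proof. by move=> [_ e] h1 h2; rewrite -e. Qed.

Lemma QP Q : quasi_max R fp Q -> quasi_prime R fp Q.
Proof.
move=> [hq n1 hmax]; split => // a b ha hb hab.
have [[QR [[Q0 QD QM] _]] _] := hq.
case: (classic (Q b)) => Qb; [by right| left].
pose J := fun d => R d /\ Q (d * b).
have QJ : subK Q J.
  by move=> q hq'; split; [apply: QR| rewrite mulrC; apply: QM].
have hJ : nzideal R J.
  split; first by move=> x [].
  split; last by have [_ [_ [q [hq' nq]]]] := proj1 hq; exists q; split => //; apply: QJ.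
  split.
  - by split; [apply: sr0| rewrite mul0r].
  - move=> x y [? ?] [? ?]; split; first by apply: srD.
    by rewrite mulrDl; apply: QD.
  - move=> r x hr [? ?]; split; first by apply: srM.
    by rewrite -mulrA; apply: QM.
have nb : b != 0 by apply/eqP => b0; apply: Qb; rewrite b0.
have qJ : quasi_ideal R fp J.
  split => //; apply: pext; last first.
    by move=> x hx; split; [apply: (fp_ext hR hs (proj2 hJ))| apply: (proj1 hJ)].
  move=> x [[F [hF hFJ hx]] hxR]; split => //.
  have hbF : fgnz R (scaleK b F).
    by split; [apply: scale_nzsubmod; case: hF| apply: fg_scale; case: hF].
  have : fp Q (b * x).
    exists (scaleK b F); split => //.
      by move=> z [f [hf ->]]; rewrite mulrC; apply: (proj2 (hFJ f hf)).
    by rewrite (st_scale hs nb (proj1 hF)); exists x.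
  by move/(quasi_in hq); rewrite mulrC => h; apply: h; apply: srM.
have e : J = Q by apply: hmax => // -[_]; rewrite mul1r.
by rewrite -e; split.
Qed.

Lemma ZL I : nzideal R I -> ~ fp I 1 -> exists Q, quasi_max R fp Q /\ subK I Q.
Proof.
move=> hI n1.
pose S J := [/\ quasi_ideal R fp J, ~ J 1 & subK I J].
pose P := fun J : K -> Prop => (forall x, ~ J x) \/ S J.
have [A [PA Amax]] : exists A, P A /\ (forall B, classical_sets.proper A B -> ~ P B).
  apply: classical_sets.Zorn_bigcup => C CP Ctot.
  rewrite /classical_sets.bigcup /=.
  case: (classic (exists X, C X /\ S X)); last first.
    move=> hn; left => x [X CX Xx]; case: (CP X CX) => [/(_ x)//|SX].
    by apply: hn; exists X.
  move=> [X0 [CX0 SX0]]; right.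
  set U := (fun a => exists2 i, C i & i a).
  have memS : forall X x, C X -> X x -> S X.
    by move=> X x CX Xx; case: (CP X CX) => [/(_ x)//|].
  have two : forall X1 X2, C X1 -> C X2 -> exists X, [/\ C X, subK X1 X & subK X2 X].
    move=> X1 X2 c1 c2; case: (Ctot X1 X2 c1 c2) => h.
      by exists X2; split.
    by exists X1; split.
  have UR : subK U R.
    move=> x [X CX Xx]; have [[[hXR _] _] _ _] := memS X x CX Xx; exact: hXR.
  have hU : nzideal R U.
    split => //; split; last first.
      have [[[_ [_ [q [hq nq]]]] _] _ _] := SX0; by exists q; split => //; exists X0.
    split.
    - have [[[_ [[X00 _ _] _]] _] _ _] := SX0; by exists X0.
    - move=> x y [X1 c1 h1] [X2 c2 h2]; have [X [cX s1 s2]] := two X1 X2 c1 c2.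
      have [[[_ [[_ XD _] _]] _] _ _] := memS X x cX (s1 _ h1).
      by exists X => //; apply: XD; [apply: s1| apply: s2].
    - move=> r x hr [X cX hx]; have [[[_ [[_ _ XM] _]] _] _ _] := memS X x cX hx.
      by exists X => //; apply: XM.
  split.
  - split => //; apply: pext; last first.
      by move=> x hx; split; [apply: (fp_ext hR hs (proj2 hU))| apply: UR].
    move=> x [[F [hF hFU hx]] hxR].
    have [_ [n [g defF]]] := hF.
    have : forall m, (m <= n)%N -> exists X, [/\ C X, S X & forall i, (i < m)%N -> X (g i)].
      elim=> [|m IH] hm; first by exists X0; split.
      have [X [cX SX hg]] := IH (ltnW hm).
      have : U (g m) by apply: hFU; rewrite defF; apply: gen_gset_in => //; apply: sr1.
      move=> [X' cX' hX']; have [Y [cY s1 s2]] := two X X' cX cX'.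
      exists Y; split => //; first exact: (memS Y (g m) cY (s2 _ hX')).
      move=> i; rewrite ltnS leq_eqVlt => /orP [/eqP ->|hi]; first exact: s2.
      by apply: s1; apply: hg.
    move=> /(_ n (leqnn n)) [X [cX SX hg]].
    have FX : subK F X.
      rewrite defF; apply: gen_sub; first by case: SX => [[[_ [hX _]] _] _ _].
      by move=> y [i [hi ->]]; apply: hg.
    exists X => //; apply: (quasi_in (let: And3 q _ _ := SX in q)) => //.
    by exists F; split.
  - by move=> [X cX X1]; have [_ h _] := memS X 1 cX X1.
  - by move=> x hx; exists X0 => //; case: SX0 => _ _; apply.
have [_ [i0 [hi0 ni0]]] := proj2 hI.
pose J0 := capK (fp I) R.
have hJ0 : nzideal R J0.
  split; first by move=> x [].
  split; last by exists i0; split => //; split; [apply: (fp_ext hR hs (proj2 hI))| apply: (proj1 hI)].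
  apply: capK_submod; first by case: (fp_nz hR hs (proj2 hI)).
  exact: sub_submod.
have SJ0 : S J0.
  split.
  - split => //; apply: pext; last first.
      by move=> x hx; split; [apply: (fp_ext hR hs (proj2 hJ0))| case: hx].
    move=> x [hx hxR]; split => //.
    rewrite -(fp_idem hR hs (proj2 hI)); apply: (fp_mono (E := J0)) => //.
    by move=> y [].
  - by case.
  - by move=> x hx; split; [apply: (fp_ext hR hs (proj2 hI))| apply: (proj1 hI)].
case: PA => [A0|SA].
  exfalso; apply: (Amax J0) => //; last by right.
  split; first by move=> x /A0.
  move=> h; apply: (A0 i0); apply: h.
  by split; [apply: (fp_ext hR hs (proj2 hI))| apply: (proj1 hI)].
exists A; split; last by case: SA.
have [qA nA1 IA] := SA; split => // J qJ nJ1 AJ.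
apply: NNPP => neq; apply: (Amax J); last by right; split => // x /IA /AJ.
split => // JA; apply: neq; apply: pext => //.
Qed.

End Zorn.
Section Gen.
Variable K : fieldType.
Implicit Types (R M D T E F A : K -> Prop).

Lemma submod_restrict D T E : subK D T -> submod T E -> submod D E.
Proof. by move=> h [E0 ED EM]; split => // r x /h; apply: EM. Qed.

Lemma gen_gen D T A : subring D -> subring T -> subK D T ->
  genmod T (genmod D A) = genmod T A.
Proof.
move=> hD hT hDT; apply: pext.
  apply: gen_sub; first exact: gen_submod.
  apply: gen_sub; first by apply: (submod_restrict hDT); apply: gen_submod.
  by move=> y hy; apply: gen_in => //; apply: sr1.
apply: gen_sub; first exact: gen_submod.
by move=> y hy; apply: gen_in; [apply: sr1| apply: gen_in => //; apply: sr1].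
Qed.

Lemma gen_self R E : subring R -> submod R E -> genmod R E = E.
Proof.
move=> hR hE; apply: pext; first by apply: gen_sub.
by move=> y hy; apply: gen_in => //; apply: sr1.
Qed.

Lemma nzR R : subring R -> nzsubmod R R.
Proof.
move=> hR; split; first exact: sub_submod.
by exists 1; split; [apply: sr1| apply: oner_neq0].
Qed.

Lemma one_in R st F : subring R -> semistar R st -> nzsubmod R F -> subK F R ->
  st F 1 -> st F = st R.
Proof.
move=> hR hs hF FR h1; apply: pext.
  by apply: (st_mono hs hF (nzR hR)).
rewrite -(st_idem hs hF); apply: (st_mono hs (nzR hR) (st_nz hs hF)).
move=> r hr; rewrite -[r]mulr1; have [[_ _ SM] _] := st_nz hs hF; exact: SM.
Qed.

Definition qprop R := forall x : K, exists a b, [/\ R a, R b, b != 0 & x = a / b].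

Lemma colon_nz R M E x : subring R -> subring M -> subK R M -> qprop R ->
  nzsubmod M E -> nzideal R (fun d => R d /\ E (d * x)).
Proof.
move=> hR hM hRM hq [[E0 ED EM] [e0 [he0 ne0]]].
split; first by move=> y [].
split; last first.
  have [a [b [ha hb nb ->]]] := hq x.
  have [c [f [hc hf nf e0E]]] := hq e0.
  have nc : c != 0 by apply: contraNneq ne0; rewrite e0E => ->; rewrite mul0r.
  exists (b * c); split; last by rewrite mulf_neq0.
  split; first by apply: srM.
  have -> : b * c * (a / b) = (a * f) * e0.
    by rewrite e0E; field; rewrite nb nf.
  by apply: EM => //; apply: hRM; apply: srM.
split.
- by split; [apply: sr0| rewrite mul0r].
- move=> y z [? ?] [? ?]; split; first by apply: srD.
  by rewrite mulrDl; apply: ED.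
- move=> r y hr [? ?]; split; first by apply: srM.
  by rewrite -mulrA; apply: EM => //; apply: hRM.
Qed.

Lemma tilde_le_fp R st : subring R -> semistar R st -> qprop R ->
  st_le R (stilde R st) (finite_part R st).
Proof.
move=> hR hs hq E hE x hx.
case: (eqVneq x 0) => [->|nx].
  by have [[? _ _] _] := fp_nz hR hs hE.
pose I := fun d => R d /\ E (d * x).
have hI : nzideal R I := colon_nz x hR hR (fun y h => h) hq hE.
have [F [hF FI F1]] : finite_part R st I 1.
  apply: NNPP => hn; have [Q [hQ IQ]] := ZL hR hs hI hn.
  have [e [s [he [sR sQ] xe]]] := hx Q hQ.
  have [[[_ [[Q0 _ _] _]] _] _ _] := hQ.
  have ns : s != 0 by apply/eqP => s0; apply: sQ; rewrite s0.
  apply: sQ; apply: IQ; split => //.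
  by rewrite xe mulrC divfK.
exists (scaleK x F); split.
- by split; [apply: scale_nzsubmod; case: hF| apply: fg_scale; case: hF].
- by move=> _ [f [hf ->]]; rewrite mulrC; apply: (proj2 (FI f hf)).
- by rewrite (st_scale hs nx (proj1 hF)); exists 1; rewrite mulr1.
Qed.

End Gen.
Section Ell.
Variable K : fieldType.
Variables D T : K -> Prop.
Variable st : (K -> Prop) -> (K -> Prop).
Hypothesis hD : subring D.
Hypothesis hq : qprop D.
Hypothesis hs : semistar D st.
Hypothesis hT : subring T.
Hypothesis hDT : subK D T.
Local Notation fpD := (finite_part D st).
Local Notation L := (ell D st).
Implicit Types (E F A P : K -> Prop).

Definition primeD P := [/\ P 0, ~ P 1 &
  forall a b, D a -> D b -> P (a * b) -> P a \/ P b].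

Lemma qprime_primeD P : quasi_prime D fpD P -> primeD P.
Proof. by case=> [[[_ [[P0 _ _] _]] _] n1 pr]; split. Qed.

Lemma qmax_primeD P : quasi_max D fpD P -> primeD P.
Proof. by move=> h; apply: qprime_primeD; apply: QP. Qed.

Section Loc.
Variable P : K -> Prop.
Hypothesis hP : primeD P.
Local Notation loc := (locK (compl_in D P)).

Lemma cs_nz s : compl_in D P s -> s != 0.
Proof. by case: hP => P0 _ _ [_ sP]; apply/eqP => s0; apply: sP; rewrite s0. Qed.

Lemma cs_mul s t : compl_in D P s -> compl_in D P t -> compl_in D P (s * t).
Proof.
case: hP => _ _ pr [hs' sP] [ht tP]; split; first exact: srM.
by move/(pr _ _ hs' ht) => [].
Qed.

Lemma cs1 : compl_in D P 1.
Proof. by case: hP => _ n1 _; split => //; apply: sr1. Qed.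

Lemma loc_ext E x : E x -> loc E x.
Proof. by move=> hx; exists x, 1; split => //; [exact: cs1| rewrite divr1]. Qed.

Lemma loc_mono E F : subK E F -> subK (loc E) (loc F).
Proof. by move=> h x [e [s [he hs' ->]]]; exists e, s; split => //; apply: h. Qed.

Lemma loc_submod E : submod T E -> submod T (loc E).
Proof.
case=> E0 ED EM; split.
- exact: loc_ext.
- move=> x y [e [s [he hs1 ->]]] [f [t [hf ht ->]]].
  exists (t * e + s * f), (s * t); split.
  + by apply: ED; apply: EM => //; apply: hDT; [case: ht| case: hs1].
  + exact: cs_mul.
  + by have := cs_nz hs1; have := cs_nz ht => nt ns; field; rewrite nt ns.
- move=> r x hr [e [s [he hs1 ->]]]; exists (r * e), s; split => //.
  + exact: EM.
  + by rewrite mulrA.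
Qed.

Lemma loc_unit R' F f : subring R' -> subK D R' -> subK F D -> F f -> ~ P f ->
  loc (genmod R' F) = loc R'.
Proof.
move=> hR' hDR FD hf nf; apply: pext.
  apply: loc_mono; apply: gen_sub; first exact: sub_submod.
  by move=> y /FD /hDR.
move=> x [r [s [hr hs1 ->]]].
have cf : compl_in D P f by split => //; apply: FD.
exists (r * f), (s * f); split.
- by exists 1%N, (fun _ => r), (fun _ => f); split => //; rewrite big_ord1.
- exact: cs_mul.
- by have := cs_nz hs1; have := cs_nz cf => n1 n2; field; rewrite n1 n2.
Qed.

End Loc.
Lemma ell_mono E F : subK E F -> subK (L E) (L F).
Proof. by move=> h x hx P hP; apply: (loc_mono h); apply: hx. Qed.

Lemma ell_ext E : subK E (L E).
Proof. by move=> x hx P hP; apply: (loc_ext (qprime_primeD hP)). Qed.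

Lemma ell_nz E : nzsubmod T E -> nzsubmod T (L E).
Proof.
move=> [hE [e0 [he0 ne0]]]; split; last by exists e0; split => //; apply: ell_ext.
have hl := fun P (hP : quasi_prime D fpD P) => loc_submod (qprime_primeD hP) hE.
split.
- by move=> P hP; have [? _ _] := hl P hP.
- by move=> x y hx hy P hP; have [_ h _] := hl P hP; apply: h; [apply: hx| apply: hy].
- by move=> r x hr hx P hP; have [_ _ h] := hl P hP; apply: h => //; apply: hx.
Qed.

Lemma ell_scale x E : x != 0 -> L (scaleK x E) = scaleK x (L E).
Proof.
move=> nx; apply: pext.
  move=> y hy; exists (y / x); split; last by field.
  move=> P hP; have [_ [s [[e [he ->]] hs1 ->]]] := hy P hP.
  have ns := cs_nz (qprime_primeD hP) hs1.
  by exists e, s; split => //; field; rewrite ns nx.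
move=> _ [z [hz ->]] P hP; have [e [s [he hs1 ->]]] := hz P hP.
exists (x * e), s; split => //; first by exists e.
by rewrite mulrA.
Qed.

Lemma ell_idem E : L (L E) = L E.
Proof.
apply: pext; last exact: ell_ext.
move=> x hx P hP; have hP' := qprime_primeD hP.
have [y [s [hy hs1 ->]]] := hx P hP; have [e [t [he ht ->]]] := hy P hP.
exists e, (t * s); split => //; first exact: cs_mul.
by have := cs_nz hP' hs1; have := cs_nz hP' ht => n1 n2; field; rewrite n1 n2.
Qed.

Lemma ell_stable E F : nzsubmod T E -> nzsubmod T F ->
  L (capK E F) = capK (L E) (L F).
Proof.
move=> [[_ _ EM] _] [[_ _ FM] _]; apply: pext.
  by move=> x hx; split; apply: ell_mono hx => y [].
move=> x [h1 h2] P hP; have hP' := qprime_primeD hP.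
have [e [s [he hs1 exs]]] := h1 P hP; have [f [t [hf ht ext]]] := h2 P hP.
have ns := cs_nz hP' hs1; have nt := cs_nz hP' ht.
have eq1 : e * t = f * s.
  transitivity (e / s * (s * t)); first by field; rewrite ns.
  by rewrite -exs ext; field; rewrite nt.
exists (e * t), (s * t); split.
- split; first by rewrite mulrC; apply: EM => //; apply: hDT; case: ht.
  by rewrite eq1 mulrC; apply: FM => //; apply: hDT; case: hs1.
- exact: cs_mul.
- by rewrite exs; field; rewrite ns nt.
Qed.

Lemma ell_semistar : semistar T L.
Proof.
split.
- exact: ell_nz.
- by move=> x E nx _; apply: ell_scale.
- by move=> E F _ _; apply: ell_mono.
- by move=> E _; apply: ell_ext.
- by move=> E _; apply: ell_idem.
Qed.

Lemma ell_stable' : stable T L.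
Proof. by move=> E F; apply: ell_stable. Qed.
Lemma not_sub P F : quasi_ideal D fpD P -> ~ P 1 -> nzideal D F -> fgmod D F ->
  st F = st D -> exists f, F f /\ ~ P f.
Proof.
move=> qP n1 hF fgF e; apply: NNPP => hn; apply: n1.
have FP : subK F P by move=> y hy; apply: NNPP => ny; apply: hn; exists y.
apply: (quasi_in qP); last exact: sr1.
exists F; split => //; first by split => //; case: hF.
by rewrite e; apply: (st_ext hs (nzR hD)); apply: sr1.
Qed.

Lemma genT F : nzideal D F -> fgmod D F ->
  nzideal T (genmod T F) /\ fgmod T (genmod T F).
Proof.
move=> [FD [_ [f0 [hf0 nf0]]]] [n [g defF]]; split.
  split; first by apply: gen_sub; [apply: sub_submod| move=> y /FD /hDT].
  split; first exact: gen_submod.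
  by exists f0; split => //; apply: gen_in => //; apply: sr1.
by exists n, g; rewrite defF gen_gen.
Qed.

Lemma link3a : linked D st T L.
Proof.
move=> F hF fgF e.
have key : forall P, quasi_prime D fpD P -> locK (compl_in D P) (genmod T F) =
   locK (compl_in D P) T.
  move=> P hP; have [qP n1 _] := hP.
  have [f [hf nf]] := not_sub qP n1 hF fgF e.
  exact: (loc_unit (qprime_primeD hP) hT hDT (proj1 hF) hf nf).
by apply: pext => x h P hP; [rewrite -key| rewrite key] => //; apply: h.
Qed.

Lemma link3b : linked D st D (stilde D st).
Proof.
move=> F hF fgF e.
have key : forall P, quasi_max D fpD P -> locK (compl_in D P) (genmod D F) =
   locK (compl_in D P) D.
  move=> P hP; have [qP n1 _] := hP.
  have [f [hf nf]] := not_sub qP n1 hF fgF e.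
  exact: (loc_unit (qmax_primeD hP) hD (fun y h => h) (proj1 hF) hf nf).
by apply: pext => x h P hP; [rewrite -key| rewrite key] => //; apply: h.
Qed.

Lemma ell_le st' : semistar T st' -> linked D st T st' -> st_le T L (stilde T st').
Proof.
move=> hs' hl E hE x hx Q hQ.
pose I := fun d => D d /\ E (d * x).
have hI : nzideal D I := colon_nz x hD hT hDT hq hE.
have [F [hF FI F1]] : fpD I 1.
  apply: NNPP => hn; have [P [hP IP]] := ZL hD hs hI hn.
  have hP' := QP hD hs hP.
  have [e [s [he [sD sP] xe]]] := hx P hP'.
  have ns := cs_nz (qprime_primeD hP') (conj sD sP).
  apply: sP; apply: IP; split => //.
  by rewrite xe mulrC divfK.
have [QT nQ1 _] := hQ; have [[_ [[Q0 _ QM] _]] _] := QT.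
case: (classic (exists d, I d /\ ~ Q d)) => [[d [[dD dE] nQd]]|hn].
  have nd : d != 0 by apply/eqP => d0; apply: nQd; rewrite d0.
  exists (d * x), d; split => //; first by split => //; apply: hDT.
  by field; rewrite nd.
exfalso; apply: nQ1.
have IQ : subK I Q by move=> y hy; apply: NNPP => ny; apply: hn; exists y.
have FD : subK F D by move=> y /FI [].
have eF : st F = st D := one_in hD hs (proj1 hF) FD F1.
have hFid : nzideal D F by split => //; case: hF.
have [hG fgG] := genT hFid (proj2 hF).
have e' := hl F hFid (proj2 hF) eF.
apply: (quasi_in QT); last by apply: sr1.
exists (genmod T F); split.
- by split => //; case: hG.
- apply: gen_sub; first by case: QT => [[_ [? _]] _].
  by move=> y /FI /IQ.
- by rewrite e'; apply: (st_ext hs' (nzR hT)); apply: sr1.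
Qed.
End Ell.

Theorem proposition3p12 (K : fieldType) (D T : K -> Prop)
  (st : (K -> Prop) -> (K -> Prop)) (st' : (K -> Prop) -> (K -> Prop)) :
  domain_with_qf D -> semistar D st -> overring D T -> semistar T st' ->
  let l := ell D st in
  (* (1) *)
  (semistar T l /\ stable T l) /\
  (* (2) *)
  (linked D st T st' ->
     st_le T l (stilde T st') /\ st_le T (stilde T st') (finite_part T st') /\
     linked T l T st') /\
  (* (3) *)
  (linked D st T l /\ linked D st D (stilde D st)) /\
  (* (4) *)
  (finite_type T l /\ forall E, nzsubmod T E -> stilde T l E = l E) /\
  (* (5) l is the least (hence unique minimal) element of
         { ast_f : ast semistar on T, T (st,ast)-linked to D } *)
  ((exists ast, [/\ semistar T ast, linked D st T ast &
                   forall E, nzsubmod T E -> finite_part T ast E = l E]) /\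
   (forall ast, semistar T ast -> linked D st T ast -> st_le T l (finite_part T ast))) /\
  (* (6) *)
  (linked D st T st' <-> linked T l T st') /\
  (* (7) *)
  (linked D st T st' <-> st_le T l (finite_part T st')).
Proof.
move=> [hD hq] hs [hT hDT] hs' l.
have hqT : qprop T.
  by move=> x; have [a [b [ha hb nb ->]]] := hq x; exists a, b; split => //; apply: hDT.
have hls : semistar T l := @ell_semistar K D T st hD hDT.
have l3a : linked D st T l := @link3a K D T st hD hs hT hDT.
have le2a := fun st0 hs0 hl0 => @ell_le K D T st hD hq hs hT hDT st0 hs0 hl0.
have le2b := fun st0 hs0 => @tilde_le_fp K T st0 hT hs0 hqT.
have lle : st_le T l (stilde T l) := le2a l hls l3a.
have lfin : forall E, nzsubmod T E -> l E = finite_part T l E.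
  move=> E hE; apply: pext.
    by move=> x hx; apply: (le2b l hls E hE); apply: lle.
  by move=> x [F [hF FE hx]]; apply: (@ell_mono K D st F E FE).
have lfp : forall ast, semistar T ast -> linked D st T ast ->
    st_le T l (finite_part T ast).
  by move=> ast hast hl E hE x hx; apply: (le2b ast hast E hE); apply: (le2a ast hast hl).
have six1 : linked D st T st' -> linked T l T st'.
  move=> hl F hF fgF e.
  have hFs := proj1 (proj2 hF).
  rewrite (gen_self hT hFs).
  have : l F 1 by rewrite e; apply: (@ell_ext K D st hD); apply: sr1.
  move/(lfp st' hs' hl F (proj2 hF)) => [G [hG GF G1]].
  apply: (one_in hT hs' (proj2 hF) (proj1 hF)).
  exact: (st_mono hs' (proj1 hG) (proj2 hF) GF G1).
have six2 : linked T l T st' -> linked D st T st'.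
  move=> hl F hF fgF e.
  have [hG fgG] := @genT K D T hD hT hDT F hF fgF.
  have := hl _ hG fgG (l3a F hF fgF e).
  by rewrite (gen_self hT (proj1 (proj2 hG))).
have seven2 : st_le T l (finite_part T st') -> linked D st T st'.
  move=> hle F hF fgF e.
  have [hG fgG] := @genT K D T hD hT hDT F hF fgF.
  have : l (genmod T F) 1.
    by rewrite (l3a F hF fgF e); apply: (@ell_ext K D st hD); apply: sr1.
  move/(hle _ (proj2 hG)) => [G [hGnz GF G1]].
  apply: (one_in hT hs' (proj2 hG) (proj1 hG)).
  exact: (st_mono hs' (proj1 hGnz) (proj2 hG) GF G1).
split; first by split => //; exact: (@ell_stable' K D T st hD hDT).
split.
  move=> hl; split; first exact: le2a.
  by split; [exact: le2b| exact: six1].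
split; first by split => //; exact: (@link3b K D st hD hs).
split.
  split; first exact: lfin.
  move=> E hE; apply: pext; last exact: lle.
  by move=> x hx; rewrite (lfin E hE); apply: (le2b l hls E hE).
split.
  split; last exact: lfp.
  by exists l; split => // E hE; rewrite -lfin.
split; split => //; first exact: lfp.
Qed.
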